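(* Let $f$ be analytic on $\mathbb{D}$ and suppose there is a constant $c\ge 0$ with $\operatorname{Diam} f(r\mathbb{D})=cr$ for all $0<r<1$. Then $f(z)=a+bz$ for some constants $a,b\in\mathbb{C}$.
   Context: $\mathbb{D}$ is the open unit disk, $r\mathbb{D}=\{|z|<r\}$; for a set $E\subset\mathbb{C}$, $\operatorname{Diam}E=\sup_{z,w\in E}|z-w|$. *)

(* Defs.v *)
From Stdlib Require Import Reals.
From Coquelicot Require Import Coquelicot.
Open Scope R_scope.

Definition analytic_at (f : C -> C) (z0 : C) : Prop :=
  exists (a : nat -> C) (rho : R), 0 < rho /\
    forall z : C, Cmod (z - z0)%C < rho ->
      is_series (fun n : nat => (a n * pow_n (z - z0)%C n)%C) (f z).

Definition analytic_on_disk (f : C -> C) : Prop :=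
  forall z0 : C, Cmod z0 < 1 -> analytic_at f z0.

Definition diam_image_disk (f : C -> C) (r : R) : Rbar :=
  Lub_Rbar (fun d : R => exists z w : C,
    Cmod z < r /\ Cmod w < r /\ d = Cmod (f z - f w)%C).

(* Main.v *)
Require Import Defs.
From Stdlib Require Import Reals.
From Coquelicot Require Import Coquelicot.
From Stdlib Require Import Lra Lia Psatz Classical.
Open Scope R_scope.

Lemma pow_n_C (z:C) n : @pow_n C_Ring z n = Cpow z n.
Proof. induction n; simpl; auto. Qed.

Fixpoint fsum (x : nat -> C) (N : nat) : C :=
  match N with O => 0%C | S N' => (fsum x N' + x N')%C end.

Lemma sum_n_fsum (x : nat -> C) n : @sum_n C_AbelianMonoid x n = fsum x (S n).
Proof.
  induction n.
  - rewrite sum_O. simpl. rewrite Cplus_0_l. reflexivity.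
  - rewrite sum_Sn, IHn. reflexivity.
Qed.

Lemma fsum_zero (x : nat -> C) N : (forall k, (k < N)%nat -> x k = 0%C) -> fsum x N = 0%C.
Proof.
  induction N; intros H; simpl; auto.
  rewrite IHN by (intros; apply H; lia). rewrite H by lia. apply Cplus_0_l.
Qed.

Lemma series_le (x : nat -> C) (y : nat -> R) X Y :
  is_series (V:=C_NormedModule) x X -> is_series (V:=R_NormedModule) y Y ->
  (forall n, Cmod (x n) <= y n) -> Cmod X <= Y.
Proof.
  intros Hx Hy Hb.
  assert (Hs: forall n, Cmod (sum_n x n) <= sum_n y n).
  { intro n. eapply Rle_trans. apply (norm_sum_n_m (K:=C_AbsRing) (V:=C_NormedModule) x 0 n).
    apply sum_n_m_le. intros; apply Hb. }
  assert (L1: is_lim_seq (fun n => Cmod (sum_n x n)) (Cmod X)).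
  { apply (filterlim_comp _ _ _ _ (@norm C_AbsRing C_NormedModule) _ _ _ Hx). apply (filterlim_norm (K:=C_AbsRing) (V:=C_NormedModule) X). }
  apply (is_lim_seq_le _ _ (Cmod X) Y Hs L1). exact Hy.
Qed.

Lemma geom_tail (K th : R) (m : nat) : 0 <= K -> 0 <= th <= /2 ->
  is_series (V:=R_NormedModule) (fun k => K * th ^ m * th ^ k) (K * th ^ m * / (1 - th)).
Proof.
  intros HK Hth.
  apply (is_series_scal (K:=R_AbsRing) (V:=R_NormedModule) (K * th ^ m) (fun k => th ^ k)).
  apply is_series_geom. rewrite Rabs_pos_eq; lra.
Qed.

Lemma tail_bound (x : nat -> C) X m K th :
  0 <= K -> 0 <= th <= /2 -> is_series (V:=C_NormedModule) x X ->
  (forall n, (n < m)%nat -> x n = 0%C) ->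
  (forall n, (m <= n)%nat -> Cmod (x n) <= K * th ^ n) ->
  Cmod X <= 2 * K * th ^ m.
Proof.
  intros HK Hth Hx Hz Hb.
  assert (Hsh : is_series (V:=C_NormedModule) (fun k => x (m + k)%nat) X).
  { destruct m as [|m'].
    - simpl. exact Hx.
    - apply is_series_incr_n. lia.
      assert (E: fsum x (S m') = RtoC 0).
      { apply fsum_zero. intros; apply Hz; lia. }
      pose proof (eq_trans (sum_n_fsum x m') E) as E2.
      match goal with |- is_series _ (plus X ?t) => replace t with (RtoC 0) end.
      replace (plus X (RtoC 0)) with X. exact Hx.
      change (X = X + 0)%C. rewrite Cplus_0_r. reflexivity. }
  assert (Hthm: 0 <= th ^ m) by (apply pow_le; lra).
  eapply Rle_trans.
  - apply (series_le _ _ _ _ Hsh (geom_tail K th m HK Hth)).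
    intro n. eapply Rle_trans. apply Hb. lia. rewrite pow_add. lra.
  - assert (0 < 1 - th) by lra.
    assert (/ (1 - th) <= 2).
    { apply (Rmult_le_reg_l (1 - th)); auto. rewrite Rinv_r by lra. lra. }
    assert (0 <= K * th ^ m) by (apply Rmult_le_pos; auto).
    nra.
Qed.

Definition trunc (x : nat -> C) N := fun n => if (n <? N)%nat then x n else 0%C.

Lemma fsum_trunc x N n : fsum (trunc x N) n = fsum x (Nat.min n N).
Proof.
  induction n.
  - rewrite Nat.min_0_l. reflexivity.
  - cbn [fsum]. rewrite IHn. unfold trunc. destruct (Nat.ltb_spec n N).
    + replace (Nat.min (S n) N) with (S (Nat.min n N)) by lia.
      replace (Nat.min n N) with n by lia. reflexivity.
    + replace (Nat.min (S n) N) with (Nat.min n N) by lia. apply Cplus_0_r.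
Qed.

Lemma fin_series (x : nat -> C) N :
  is_series (V:=C_NormedModule) (trunc x N) (fsum x N).
Proof.
  unfold is_series.
  apply filterlim_ext_loc with (fun _ => fsum x N).
  - exists N. intros n Hn. rewrite sum_n_fsum, fsum_trunc.
    f_equal. lia.
  - apply filterlim_const.
Qed.

Lemma tail_from (x : nat -> C) X m K th :
  0 <= K -> 0 <= th <= /2 -> is_series (V:=C_NormedModule) x X ->
  (forall n, (m <= n)%nat -> Cmod (x n) <= K * th ^ n) ->
  Cmod (X - fsum x m) <= 2 * K * th ^ m.
Proof.
  intros HK Hth Hx Hb.
  pose proof (is_series_minus _ _ _ _ Hx (fin_series x m)) as H.
  apply (tail_bound _ _ m K th HK Hth H).
  - intros n Hn. unfold trunc. destruct (Nat.ltb_spec n m); try lia.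
    change (x n - x n = 0)%C. ring.
  - intros n Hn. unfold trunc. destruct (Nat.ltb_spec n m); try lia.
    change (Cmod (x n - 0) <= K * th ^ n). replace (x n - 0)%C with (x n) by ring. auto.
Qed.

Lemma Cmod_term (c : C) (s : R) n : 0 <= s -> Cmod (c * Cpow (RtoC s) n) = Cmod c * s ^ n.
Proof.
  intro Hs. rewrite Cmod_mult, Cmod_pow, Cmod_R, Rabs_pos_eq; auto.
Qed.

Lemma coef_bound (c : nat -> C) (r : R) Sm : 0 < r ->
  is_series (V:=C_NormedModule) (fun n => c n * Cpow (RtoC r) n)%C Sm ->
  exists B, 0 <= B /\ forall n, Cmod (c n) * r ^ n <= B.
Proof.
  intros Hr Hs.
  set (x := fun n => (c n * Cpow (RtoC r) n)%C).
  destruct (filterlim_bounded (K:=C_AbsRing) (V:=C_NormedModule) (sum_n x)) as [M HM].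
  { exists Sm. exact Hs. }
  assert (HF: forall n, Cmod (fsum x (S n)) <= M).
  { intro n. rewrite <- sum_n_fsum. exact (HM n). }
  exists (2 * M). split.
  { pose proof (HF 0%nat). pose proof (Cmod_ge_0 (fsum x 1)). lra. }
  intro n. rewrite <- Cmod_term by lra. fold (x n).
  destruct n.
  - pose proof (HF 0%nat) as h. simpl in h. rewrite Cplus_0_l in h.
    pose proof (Cmod_ge_0 (x 0%nat)). lra.
  - replace (x (S n)) with (fsum x (S (S n)) - fsum x (S n))%C.
    + eapply Rle_trans. 
      * replace (fsum x (S (S n)) - fsum x (S n))%C with (fsum x (S (S n)) + - fsum x (S n))%C by ring.
        apply Cmod_triangle.
      * rewrite Cmod_opp. pose proof (HF (S n)). pose proof (HF n). lra.
    + cbn [fsum]. ring.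
Qed.

Lemma uniq0 (c : nat -> C) eps : 0 < eps ->
  (forall s, 0 < s < eps -> is_series (V:=C_NormedModule) (fun n => c n * Cpow (RtoC s) n)%C (RtoC 0)) ->
  forall n, c n = RtoC 0.
Proof.
  intros He Hs.
  set (r := eps / 2).
  assert (Hr : 0 < r) by (unfold r; lra).
  destruct (coef_bound c r _ Hr (Hs r ltac:(unfold r; lra))) as [B [HB Hb]].
  intro n. induction n as [n IH] using (well_founded_induction Wf_nat.lt_wf).
  destruct (Ceq_dec (c n) (RtoC 0)) as [E|E]; auto. exfalso.
  assert (Hpos : 0 < Cmod (c n)) by (apply Cmod_gt_0; auto).
  assert (key : forall s, 0 < s <= r / 2 -> Cmod (c n) * s ^ n <= 2 * B * (s / r) ^ (S n)).
  { intros s Hs'.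
    set (x := fun k => (c k * Cpow (RtoC s) k)%C).
    assert (Hser := Hs s ltac:(unfold r in *; lra)).
    pose proof (tail_from x (RtoC 0) (S n) B (s / r) HB) as T.
    assert (Hth : 0 <= s / r <= / 2).
    { split. apply Rmult_le_pos; [lra| left; apply Rinv_0_lt_compat; lra].
      apply (Rmult_le_reg_l r); auto. field_simplify; lra. }
    specialize (T Hth Hser).
    assert (Hbd : forall k, (S n <= k)%nat -> Cmod (x k) <= B * (s / r) ^ k).
    { intros k _. unfold x. rewrite Cmod_term by lra.
      replace (s ^ k) with ((s / r) ^ k * r ^ k).
      - specialize (Hb k). pose proof (pow_le (s / r) k ltac:(lra)).
        pose proof (Cmod_ge_0 (c k)). nra.
      - rewrite <- Rpow_mult_distr. f_equal. field. lra. }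
    specialize (T Hbd).
    cbn [fsum] in T. rewrite fsum_zero in T by (intros; unfold x; rewrite IH by lia; ring).
    unfold x in T. replace (RtoC 0 - (RtoC 0 + c n * Cpow (RtoC s) n))%C with (- (c n * Cpow (RtoC s) n))%C in T by ring.
    rewrite Cmod_opp, Cmod_term in T by lra. exact T. }
  set (P := r ^ S n).
  assert (HP : 0 < P) by (apply pow_lt; auto).
  set (s := Rmin (r / 2) (Cmod (c n) * P / (4 * B + 1))).
  assert (Hs0 : 0 < s).
  { unfold s. apply Rmin_pos. lra. apply Rmult_lt_0_compat. nra. apply Rinv_0_lt_compat; lra. }
  assert (Hs1 : s <= r / 2) by apply Rmin_l.
  assert (Hs2 : s <= Cmod (c n) * P / (4 * B + 1)) by apply Rmin_r.
  specialize (key s (conj Hs0 Hs1)).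
  replace ((s / r) ^ S n) with (s ^ n * s / P) in key.
  2:{ unfold P. unfold Rdiv. rewrite Rpow_mult_distr, pow_inv. simpl. field. split; try lra. apply pow_nonzero; lra. }
  assert (Hsn : 0 < s ^ n) by (apply pow_lt; auto).
  assert (K2 : Cmod (c n) <= 2 * B * s / P).
  { apply (Rmult_le_reg_r (s ^ n)); auto.
    replace (2 * B * s / P * s ^ n) with (2 * B * (s ^ n * s / P)) by (field; lra). lra. }
  assert (K3a : s / P <= Cmod (c n) / (4 * B + 1)).
  { apply (Rmult_le_reg_r P); auto.
    replace (s / P * P) with s by (field; lra).
    replace (Cmod (c n) / (4 * B + 1) * P) with (Cmod (c n) * P / (4 * B + 1)) by (field; lra). lra. }
  assert (K3 : 2 * B * s / P <= 2 * B * Cmod (c n) / (4 * B + 1)).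
  { replace (2 * B * s / P) with (2 * B * (s / P)) by (field; lra).
    replace (2 * B * Cmod (c n) / (4 * B + 1)) with (2 * B * (Cmod (c n) / (4 * B + 1))) by (field; lra).
    apply Rmult_le_compat_l; lra. }
  assert (K4 : 2 * B * Cmod (c n) / (4 * B + 1) < Cmod (c n)).
  { apply (Rmult_lt_reg_r (4 * B + 1)). lra.
    replace (2 * B * Cmod (c n) / (4 * B + 1) * (4 * B + 1)) with (2 * B * Cmod (c n)) by (field; lra).
    nra. }
  lra.
Qed.

Lemma uniq_aff (c : nat -> C) eps p q : 0 < eps ->
  (forall s, 0 < s < eps -> is_series (V:=C_NormedModule) (fun n => c n * Cpow (RtoC s) n)%C (p + q * RtoC s)%C) ->
  c 0%nat = p /\ c 1%nat = q /\ forall n, (2 <= n)%nat -> c n = RtoC 0.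
Proof.
  intros He Hs.
  set (d := fun n => match n with 0%nat => p | 1%nat => q | _ => RtoC 0 end).
  assert (H0 : forall n, (c n - d n)%C = RtoC 0).
  { apply (uniq0 _ eps He). intros s Hs'.
    pose proof (is_series_minus _ _ _ _ (Hs s Hs') (fin_series (fun n => d n * Cpow (RtoC s) n)%C 2)) as H.
    match type of H with is_series _ ?l => replace (RtoC 0) with l end.
    - eapply is_series_ext; [|exact H]. intro n. simpl. unfold trunc. destruct (Nat.ltb_spec n 2).
      + change ((c n * Cpow s n) - d n * Cpow s n = (c n - d n) * Cpow s n)%C. ring.
      + destruct n as [|[|n]]; try lia. simpl.
        change ((c (S (S n)) * Cpow s (S (S n))) - 0 = (c (S (S n)) - 0) * Cpow s (S (S n)))%C. ring.
    - simpl. change (p + q * s + - (0 + p * 1 + q * (s * 1)) = 0)%C. ring. }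
  assert (E : forall n, c n = d n).
  { intro n. specialize (H0 n). apply Ceq_minus. exact H0. }
  split; [|split].
  - apply E.
  - apply E.
  - intros n Hn. rewrite E. destruct n as [|[|n]]; try lia. reflexivity.
Qed.

Lemma sin_lb1 x : 0 <= x <= 1 -> x - x^3/6 <= sin x.
Proof. intros H. pose proof PI2_1. pose proof (sin_bound x 0 ltac:(lra) ltac:(lra)) as [h _].
  unfold sin_approx, sin_term in h. simpl in h. lra. Qed.
Lemma cos_lb1 x : -1 <= x <= 1 -> 1 - x^2/2 <= cos x.
Proof. intros H. pose proof PI2_1. pose proof (cos_bound x 0 ltac:(lra) ltac:(lra)) as [h _].
  unfold cos_approx, cos_term in h. simpl in h. lra. Qed.

Lemma abs_sin_le x : Rabs (sin x) <= Rabs x.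
Proof.
  assert (P : forall y, 0 <= y -> Rabs (sin y) <= y).
  { intros y Hy. destruct (Rle_lt_dec y 1).
    - pose proof PI2_1. assert (0 <= sin y) by (apply sin_ge_0; lra).
      rewrite Rabs_pos_eq by lra. destruct (Req_dec y 0).
      + subst. rewrite sin_0. lra.
      + left. apply sin_lt_x. lra.
    - pose proof (SIN_bound y). apply Rabs_le_between. lra. }
  destruct (Rle_lt_dec 0 x).
  - rewrite (Rabs_pos_eq x) by lra. auto.
  - rewrite (Rabs_left x) by lra. replace (sin x) with (- sin (- x)) by (rewrite sin_neg; ring). rewrite Rabs_Ropp. apply P. lra.
Qed.

Definition ee (a : R) : C := (cos a, sin a).

Lemma ee_mult a b : (ee a * ee b)%C = ee (a + b).
Proof. unfold ee, Cmult. simpl. rewrite cos_plus, sin_plus. f_equal; ring. Qed.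

Lemma ee_0 : ee 0 = RtoC 1.
Proof. unfold ee, RtoC. rewrite cos_0, sin_0. reflexivity. Qed.

Lemma ee_pow a n : Cpow (ee a) n = ee (INR n * a).
Proof.
  induction n.
  - simpl. rewrite Rmult_0_l, ee_0. reflexivity.
  - rewrite Cpow_S, IHn, ee_mult, S_INR. f_equal. ring.
Qed.

Lemma Cmod_ee a : Cmod (ee a) = 1.
Proof.
  unfold Cmod, ee. simpl. pose proof (sin2_cos2 a). unfold Rsqr in H.
  replace (cos a * (cos a * 1) + sin a * (sin a * 1)) with 1 by lra. apply sqrt_1.
Qed.

Lemma ee_diff a : (ee a - ee (- a))%C = (0, 2 * sin a).
Proof. unfold ee, Cminus, Cplus, Copp. simpl. rewrite cos_neg, sin_neg. f_equal; ring. Qed.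

Lemma ee_sum a : (ee a + ee (- a))%C = RtoC (2 * cos a).
Proof. unfold ee, Cplus, RtoC. simpl. rewrite cos_neg, sin_neg. f_equal; ring. Qed.

Lemma polar v : Cmod v = 1 -> exists a, v = ee a.
Proof.
  destruct v as [x y]. intro H. unfold Cmod in H. simpl in H.
  assert (H2 : x * x + y * y = 1).
  { assert (0 <= x * (x * 1) + y * (y * 1)) by nra.
    pose proof (sqrt_sqrt _ H0). rewrite H in H1. nra. }
  assert (Hx : -1 <= x <= 1) by nra.
  assert (Hs : sqrt (1 - x²) = Rabs y).
  { rewrite <- sqrt_Rsqr_abs. f_equal. unfold Rsqr. lra. }
  destruct (Rle_lt_dec 0 y).
  - exists (acos x). unfold ee. rewrite cos_acos, sin_acos by auto.
    rewrite Hs, Rabs_pos_eq by lra. reflexivity.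
  - exists (- acos x). unfold ee. rewrite cos_neg, sin_neg, cos_acos, sin_acos by auto.
    rewrite Hs, Rabs_left by lra. f_equal. ring.
Qed.

Lemma unit_root v k : Cmod v = 1 -> (0 < k)%nat -> exists u, Cmod u = 1 /\ Cpow u k = v.
Proof.
  intros Hv Hk. destruct (polar v Hv) as [a Ha]. subst.
  exists (ee (a / INR k)). split. apply Cmod_ee.
  rewrite ee_pow. f_equal. field. apply not_0_INR. lia.
Qed.

Lemma Cpow_opp_even z k : Cpow (- z) (2 * k) = Cpow z (2 * k).
Proof. rewrite !Cpow_mult_r. f_equal. simpl. ring. Qed.

Lemma Cpow_opp_odd z k : Cpow (- z) (2 * k + 1) = (- Cpow z (2 * k + 1))%C.
Proof. rewrite !Cpow_add_r, Cpow_opp_even. simpl. ring. Qed.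

Lemma fsum_zero_from x N M : (forall j, (N <= j < N + M)%nat -> x j = RtoC 0) -> fsum x (N + M) = fsum x N.
Proof.
  induction M; intros H.
  - rewrite Nat.add_0_r. reflexivity.
  - rewrite Nat.add_succ_r. cbn [fsum]. rewrite IHM by (intros; apply H; lia).
    rewrite H by lia. apply Cplus_0_r.
Qed.

Lemma fsum_sparse x m : (2 <= m)%nat ->
  (forall j, (j < m)%nat -> j <> 1%nat -> x j = RtoC 0) -> fsum x (S m) = (x 1%nat + x m)%C.
Proof.
  intros Hm H. cbn [fsum].
  replace m with (2 + (m - 2))%nat at 1 by lia.
  rewrite fsum_zero_from by (intros; apply H; lia).
  simpl. rewrite (H 0%nat) by lia. f_equal. ring.
Qed.

Lemma le_small A K d : 0 < d -> (forall s, 0 < s <= d -> A <= K * s) -> A <= 0.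
Proof.
  intros Hd H. destruct (Rle_lt_dec A 0); auto. exfalso.
  destruct (Rle_lt_dec K 0).
  - specialize (H d (conj Hd (Rle_refl _))). nra.
  - set (s := Rmin d (A / (2 * K))).
    assert (0 < s) by (unfold s; apply Rmin_pos; auto; apply Rdiv_lt_0_compat; lra).
    assert (s <= A / (2 * K)) by apply Rmin_r.
    specialize (H s (conj H0 (Rmin_l _ _))).
    assert (K * s <= A / 2).
    { replace (A / 2) with (K * (A / (2 * K))) by (field; lra). apply Rmult_le_compat_l; lra. }
    lra.
Qed.

Lemma INR_le_pow2 n : INR n <= 2 ^ n.
Proof.
  induction n. simpl; lra.
  rewrite S_INR. simpl. assert (1 <= 2 ^ n) by (apply pow_R1_Rle; lra). lra.
Qed.

Lemma coef_le (a : nat -> C) r0 B n th : 0 < r0 -> 0 <= th -> Cmod (a n) * r0 ^ n <= B ->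
  Cmod (a n) * (th * r0) ^ n <= B * th ^ n.
Proof.
  intros Hr Hth H. rewrite Rpow_mult_distr.
  pose proof (pow_le th n Hth). pose proof (Cmod_ge_0 (a n)). nra.
Qed.

Lemma expand (f : C -> C) (a : nat -> C) rho0 r0 B z m :
  (forall z, Cmod z < rho0 -> is_series (V:=C_NormedModule) (fun n => a n * Cpow z n)%C (f z)) ->
  0 < r0 -> r0 < rho0 -> 0 <= B -> (forall n, Cmod (a n) * r0 ^ n <= B) ->
  Cmod z <= r0 / 2 ->
  Cmod (f z - fsum (fun n => a n * Cpow z n)%C m) <= 2 * B * (Cmod z / r0) ^ m.
Proof.
  intros Hser Hr0 Hr1 HB Hb Hz.
  pose proof (Cmod_ge_0 z).
  apply tail_from; auto.
  - split. apply Rmult_le_pos; [lra | left; apply Rinv_0_lt_compat; lra].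
    apply (Rmult_le_reg_l r0); auto. field_simplify; lra.
  - apply Hser. lra.
  - intros n _. rewrite Cmod_mult, Cmod_pow.
    replace (Cmod z) with ((Cmod z / r0) * r0) at 1 by (field; lra).
    apply coef_le; auto. apply Rmult_le_pos; [lra | left; apply Rinv_0_lt_compat; lra].
Qed.

Lemma pair_series (f : C -> C) (a : nat -> C) rho0 z w :
  (forall z, Cmod z < rho0 -> is_series (V:=C_NormedModule) (fun n => a n * Cpow z n)%C (f z)) ->
  Cmod z < rho0 -> Cmod w < rho0 ->
  is_series (V:=C_NormedModule) (fun n => a n * Cpow z n - a n * Cpow w n)%C (f z - f w)%C.
Proof.
  intros Hser Hz Hw.
  exact (is_series_minus _ _ _ _ (Hser z Hz) (Hser w Hw)).
Qed.

Lemma step1 (f : C -> C) (c : R) (a : nat -> C) rho0 r0 B :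
  (forall z, Cmod z < rho0 -> is_series (V:=C_NormedModule) (fun n => a n * Cpow z n)%C (f z)) ->
  0 < r0 -> r0 < rho0 -> r0 <= / 2 -> 0 <= B -> (forall n, Cmod (a n) * r0 ^ n <= B) ->
  (forall r eps, 0 < r < 1 -> 0 < eps -> exists z w, Cmod z < r /\ Cmod w < r /\ c * r - eps < Cmod (f z - f w)) ->
  c <= 2 * Cmod (a 1%nat).
Proof.
  intros Hser Hr0 Hr1 Hr2 HB Hb H2.
  set (D := 1 + 4 * B / (r0 * r0)).
  assert (HD : 1 <= D) by (unfold D; assert (0 <= 4 * B / (r0 * r0)) by (apply Rdiv_le_0_compat; nra); lra).
  assert (K : forall r, 0 < r <= r0 / 2 -> c <= 2 * Cmod (a 1%nat) + D * r).
  { intros r Hr.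
    destruct (H2 r (r * r) ltac:(lra) ltac:(nra)) as [z [w [Hz [Hw Hzw]]]].
    pose proof (expand f a rho0 r0 B z 2 Hser Hr0 Hr1 HB Hb ltac:(lra)) as Ez.
    pose proof (expand f a rho0 r0 B w 2 Hser Hr0 Hr1 HB Hb ltac:(lra)) as Ew.
    cbn [fsum] in Ez, Ew.
    set (Lz := (RtoC 0 + a 0%nat * Cpow z 0 + a 1%nat * Cpow z 1)%C) in Ez.
    set (Lw := (RtoC 0 + a 0%nat * Cpow w 0 + a 1%nat * Cpow w 1)%C) in Ew.
    assert (E : (f z - f w = (f z - Lz) + - (f w - Lw) + a 1%nat * (z - w))%C).
    { unfold Lz, Lw. simpl. ring. }
    assert (Hzw2 : Cmod (f z - f w) <= Cmod (f z - Lz) + Cmod (f w - Lw) + Cmod (a 1%nat) * (2 * r)).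
    { rewrite E. eapply Rle_trans. apply Cmod_triangle. rewrite Cmod_mult.
      eapply Rle_trans. apply Rplus_le_compat_r. apply Cmod_triangle. rewrite Cmod_opp.
      apply Rplus_le_compat_l. apply Rmult_le_compat_l. apply Cmod_ge_0.
      eapply Rle_trans. replace (z - w)%C with (z + - w)%C by ring. apply Cmod_triangle.
      rewrite Cmod_opp. lra. }
    assert (Bz : 2 * B * (Cmod z / r0) ^ 2 <= 2 * B * (r / r0) ^ 2).
    { apply Rmult_le_compat_l. lra. apply pow_incr. split.
      apply Rmult_le_pos; [apply Cmod_ge_0 | left; apply Rinv_0_lt_compat; lra].
      apply Rmult_le_compat_r; [left; apply Rinv_0_lt_compat; lra | lra]. }
    assert (Bw : 2 * B * (Cmod w / r0) ^ 2 <= 2 * B * (r / r0) ^ 2).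
    { apply Rmult_le_compat_l. lra. apply pow_incr. split.
      apply Rmult_le_pos; [apply Cmod_ge_0 | left; apply Rinv_0_lt_compat; lra].
      apply Rmult_le_compat_r; [left; apply Rinv_0_lt_compat; lra | lra]. }
    assert (Q : 2 * B * (r / r0) ^ 2 = (D - 1) / 2 * r * r) by (unfold D; field; lra).
    assert (c * r <= (2 * Cmod (a 1%nat) + D * r) * r) by lra.
    apply (Rmult_le_reg_r r); lra. }
  destruct (Rle_lt_dec c (2 * Cmod (a 1%nat))) as [|Hlt]; auto. exfalso.
  set (r := Rmin (r0 / 2) ((c - 2 * Cmod (a 1%nat)) / (2 * D))).
  assert (0 < r) by (unfold r; apply Rmin_pos; [lra | apply Rdiv_lt_0_compat; lra]).
  assert (r <= (c - 2 * Cmod (a 1%nat)) / (2 * D)) by apply Rmin_r.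
  specialize (K r (conj H (Rmin_l _ _))).
  assert (D * r <= (c - 2 * Cmod (a 1%nat)) / 2).
  { replace ((c - 2 * Cmod (a 1%nat)) / 2) with (D * ((c - 2 * Cmod (a 1%nat)) / (2 * D))) by (field; lra).
    apply Rmult_le_compat_l; lra. }
  lra.
Qed.

Lemma Cpow_RtoC (s : R) n : Cpow (RtoC s) n = RtoC (s ^ n).
Proof. induction n. reflexivity. rewrite Cpow_S, IHn. simpl. rewrite RtoC_mult. reflexivity. Qed.

Lemma Cmod_RtoC_mult (t : R) (x : C) : 0 <= t -> Cmod (RtoC t * x) = t * Cmod x.
Proof. intro. rewrite Cmod_mult, Cmod_R, Rabs_pos_eq; auto. Qed.

Lemma th_ok s r0 : 0 < r0 -> 0 <= s <= r0 / 2 -> 0 <= s / r0 <= / 2.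
Proof.
  intros. split. apply Rmult_le_pos; [lra | left; apply Rinv_0_lt_compat; lra].
  apply (Rmult_le_reg_l r0); auto. field_simplify; lra.
Qed.

Lemma pow_div_eq s r0 n : 0 < r0 -> (s / r0) ^ n = s ^ n / r0 ^ n.
Proof. intro. unfold Rdiv. rewrite Rpow_mult_distr, pow_inv. reflexivity. Qed.

Lemma step3a (f : C -> C) (c : R) (a : nat -> C) rho0 r0 B :
  (forall z, Cmod z < rho0 -> is_series (V:=C_NormedModule) (fun n => a n * Cpow z n)%C (f z)) ->
  0 < r0 -> r0 < rho0 -> r0 <= / 2 -> 0 <= B -> (forall n, Cmod (a n) * r0 ^ n <= B) ->
  (forall s z w, 0 < s < 1 -> Cmod z <= s -> Cmod w <= s -> Cmod (f z - f w) <= c * s) ->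
  c <= 2 * Cmod (a 1%nat) -> a 1%nat <> RtoC 0 ->
  forall k, (1 <= k)%nat -> a (2 * k + 1)%nat = RtoC 0.
Proof.
  intros Hser Hr0 Hr1 Hr2 HB Hb H1 Hc Ha1 k.
  induction k as [k IH] using (well_founded_induction Wf_nat.lt_wf). intro Hk.
  set (m := (2 * k + 1)%nat).
  destruct (Ceq_dec (a m) (RtoC 0)) as [E|Ham]; auto. exfalso.
  assert (P1 : 0 < Cmod (a 1%nat)) by (apply Cmod_gt_0; auto).
  assert (Pm : 0 < Cmod (a m)) by (apply Cmod_gt_0; auto).
  set (lam := Cmod (a m) / Cmod (a 1%nat)).
  assert (Hlam : 0 < lam) by (unfold lam; apply Rdiv_lt_0_compat; auto).
  set (v := (RtoC lam * a 1%nat / a m)%C).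
  assert (Hv : Cmod v = 1).
  { unfold v. rewrite Cmod_div by auto. rewrite Cmod_mult, Cmod_R, Rabs_pos_eq by lra. unfold lam. field. lra. }
  destruct (unit_root v (2 * k) Hv ltac:(lia)) as [u [Hu Huv]].
  set (K := 2 * B / r0 ^ (S (S (2 * k)))).
  assert (HK : 0 <= K) by (unfold K; apply Rdiv_le_0_compat; [lra | apply pow_lt; lra]).
  assert (Key : forall s, 0 < s <= r0 / 2 -> Cmod (a m) <= K * s).
  { intros s Hs.
    set (z := (RtoC s * u)%C).
    assert (Hz : Cmod z = s) by (unfold z; rewrite Cmod_RtoC_mult by lra; rewrite Hu; ring).
    assert (Hw : Cmod (- z) = s) by (rewrite Cmod_opp; auto).
    pose proof (pair_series f a rho0 z (- z) Hser ltac:(lra) ltac:(lra)) as PS.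
    pose proof (H1 s z (- z)%C ltac:(lra) ltac:(lra) ltac:(lra)) as HH.
    set (x := fun n => (a n * Cpow z n - a n * Cpow (- z) n)%C) in PS.
    pose proof (tail_from x _ (S m) (2 * B) (s / r0) ltac:(lra) (th_ok s r0 Hr0 ltac:(lra)) PS) as T.
    assert (Tb : forall n, (S m <= n)%nat -> Cmod (x n) <= 2 * B * (s / r0) ^ n).
    { intros n _. unfold x.
      eapply Rle_trans. replace (a n * Cpow z n - a n * Cpow (- z) n)%C with (a n * Cpow z n + - (a n * Cpow (- z) n))%C by ring.
      apply Cmod_triangle. rewrite Cmod_opp, !Cmod_mult, !Cmod_pow, Hz, Hw.
      replace s with ((s / r0) * r0) at 1 2 by (field; lra).
      pose proof (coef_le a r0 B n (s / r0) Hr0 (proj1 (th_ok s r0 Hr0 ltac:(lra))) (Hb n)). lra. }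
    specialize (T Tb).
    rewrite fsum_sparse in T.
    2:{ unfold m. lia. }
    2:{ intros j Hj Hj1. unfold x. destruct (Nat.Even_or_Odd j) as [[i Hi]|[i Hi]]; subst j.
        - rewrite Cpow_opp_even. ring.
        - rewrite IH; try lia. ring. }
    assert (Ex : (x 1%nat + x m)%C = (RtoC (2 * s * (1 + lam * s ^ (2 * k))) * (a 1%nat * u))%C).
    { unfold x, m. rewrite Cpow_opp_odd. unfold z. rewrite !Cpow_mult_l, !Cpow_add_r, Huv, !Cpow_RtoC.
      replace (s ^ 1) with s by ring. unfold v.
      rewrite !Cpow_1_r. repeat (rewrite RtoC_mult || rewrite RtoC_plus).
      fold m. field. auto. }
    rewrite Ex in T.
    assert (Hpos : 0 <= 2 * s * (1 + lam * s ^ (2 * k))).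
    { pose proof (pow_le s (2 * k) ltac:(lra)). apply Rmult_le_pos. lra. pose proof (Rmult_le_pos lam _ ltac:(lra) H). lra. }
    assert (Cmod (RtoC (2 * s * (1 + lam * s ^ (2 * k))) * (a 1%nat * u)) <= c * s + 2 * (2 * B) * (s / r0) ^ S m).
    { set (X := (RtoC (2 * s * (1 + lam * s ^ (2 * k))) * (a 1%nat * u))%C) in *.
      set (A := (f z - f (- z))%C) in *.
      replace X with (A + - (A - X))%C by ring.
      eapply Rle_trans. apply Cmod_triangle. rewrite Cmod_opp. lra. }
    rewrite Cmod_RtoC_mult, Cmod_mult, Hu in H by auto.
    rewrite pow_div_eq in H by lra.
    assert (Lm : lam * Cmod (a 1%nat) = Cmod (a m)) by (unfold lam; field; lra).
    assert (Hsk : 0 < s ^ (2 * k)) by (apply pow_lt; lra).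
    assert (E1 : s ^ S m = s ^ (2 * k) * (s * s)) by (unfold m; rewrite <- !tech_pow_Rmult, <- Nat.add_1_r; rewrite pow_add; simpl; ring).
    rewrite E1 in H.
    assert (E2 : 2 * (2 * B) * (s ^ (2 * k) * (s * s) / r0 ^ S m) = 2 * s * s ^ (2 * k) * (K * s)).
    { unfold K, m. replace (S (2 * k + 1)) with (S (S (2 * k))) by lia. field. apply pow_nonzero. lra. }
    rewrite E2 in H.
    assert (2 * s * s ^ (2 * k) * Cmod (a m) <= 2 * s * s ^ (2 * k) * (K * s)).
    { rewrite <- Lm. assert (c * s <= 2 * Cmod (a 1%nat) * s) by nra. nra. }
    apply (Rmult_le_reg_l (2 * s * s ^ (2 * k))). nra. lra. }
  pose proof (le_small _ _ (r0 / 2) ltac:(lra) Key). lra.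
Qed.

Lemma Ci_RtoC t : ((0, t) : C) = (Ci * RtoC t)%C.
Proof. unfold Ci, RtoC, Cmult. simpl. f_equal; ring. Qed.

Lemma diff_even (s phi : R) (u : C) i :
  (Cpow (RtoC s * u * ee phi) (2 * i) - Cpow (- (RtoC s * u * ee (- phi))) (2 * i))%C =
  (RtoC (s ^ (2 * i)) * Cpow u (2 * i) * (Ci * RtoC (2 * sin (INR (2 * i) * phi))))%C.
Proof.
  rewrite Cpow_opp_even, !Cpow_mult_l, !ee_pow, Cpow_RtoC.
  replace (INR (2 * i) * - phi) with (- (INR (2 * i) * phi)) by ring.
  rewrite <- Ci_RtoC, <- ee_diff. ring.
Qed.

Lemma pow_le1 s n : 0 <= s <= 1 -> s ^ n <= 1.
Proof. intros H. induction n; simpl. lra. pose proof (pow_le s n (proj1 H)). nra. Qed.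

Lemma pow_le_self s n : 0 <= s <= 1 -> s ^ (S n) <= s.
Proof.
  intros H. simpl. pose proof (pow_le s n (proj1 H)).
  assert (s ^ n <= 1) by (apply pow_le1; lra). nra.
Qed.

Lemma step3b (f : C -> C) (c : R) (a : nat -> C) rho0 r0 B :
  (forall z, Cmod z < rho0 -> is_series (V:=C_NormedModule) (fun n => a n * Cpow z n)%C (f z)) ->
  0 < r0 -> r0 < rho0 -> r0 <= / 2 -> 0 <= B -> (forall n, Cmod (a n) * r0 ^ n <= B) ->
  (forall s z w, 0 < s < 1 -> Cmod z <= s -> Cmod w <= s -> Cmod (f z - f w) <= c * s) ->
  c <= 2 * Cmod (a 1%nat) -> a 1%nat <> RtoC 0 ->
  (forall k, (1 <= k)%nat -> a (2 * k + 1)%nat = RtoC 0) ->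
  forall k, (1 <= k)%nat -> a (2 * k)%nat = RtoC 0.
Proof.
  intros Hser Hr0 Hr1 Hr2 HB Hb H1 Hc Ha1 Hodd k.
  induction k as [k IH] using (well_founded_induction Wf_nat.lt_wf). intro Hk.
  set (m := (2 * k)%nat). set (m1 := (2 * k - 1)%nat).
  assert (Hmm1 : m = S m1) by (unfold m, m1; lia).
  destruct (Ceq_dec (a m) (RtoC 0)) as [E|Ham]; auto. exfalso.
  assert (P1 : 0 < Cmod (a 1%nat)) by (apply Cmod_gt_0; auto).
  assert (Pm : 0 < Cmod (a m)) by (apply Cmod_gt_0; auto).
  set (lam := Cmod (a m) / Cmod (a 1%nat)).
  assert (Hlam : 0 < lam) by (unfold lam; apply Rdiv_lt_0_compat; auto).
  assert (Hcam : (Ci * a m)%C <> RtoC 0) by (apply Cmult_neq_0; auto; apply Ci_nz).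
  set (v := (RtoC lam * a 1%nat / (Ci * a m))%C).
  assert (Hv : Cmod v = 1).
  { unfold v. rewrite Cmod_div by auto. rewrite !Cmod_mult, Cmod_R, Cmod_Ci, Rabs_pos_eq by lra. unfold lam. field. lra. }
  destruct (unit_root v m1 Hv ltac:(unfold m1; lia)) as [u [Hu Huv]].
  assert (Hm2 : 2 <= INR m) by (replace 2 with (INR 2) by (simpl; ring); apply le_INR; unfold m; lia).
  set (K := 2 * B * 2 ^ S m / r0 ^ S m).
  assert (HK : 0 <= K) by (unfold K; apply Rdiv_le_0_compat; [apply Rmult_le_pos; [lra | apply pow_le; lra] | apply pow_lt; lra]).
  set (d := Rmin (r0 / 4) (/ (INR m * lam + 1))).
  assert (Hd : 0 < d) by (unfold d; apply Rmin_pos; [lra | apply Rinv_0_lt_compat; nra]).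
  assert (Key : forall s, 0 < s <= d -> Cmod (a m) <= K * s).
  { intros s Hs.
    assert (Hs1 : s <= r0 / 4) by (pose proof (Rmin_l (r0 / 4) (/ (INR m * lam + 1))); fold d in H; lra).
    assert (Hs2 : s <= / (INR m * lam + 1)) by (pose proof (Rmin_r (r0 / 4) (/ (INR m * lam + 1))); fold d in H; lra).
    assert (Hsl : s * (INR m * lam + 1) <= 1).
    { apply (Rmult_le_compat_r (INR m * lam + 1)) in Hs2; [|nra]. rewrite Rinv_l in Hs2 by nra. lra. }
    set (phi := lam * s ^ m1).
    assert (Hsm1 : s ^ m1 <= s) by (unfold m1; replace (2 * k - 1)%nat with (S (2 * k - 2)) by lia; apply pow_le_self; lra).
    assert (Hsm1p : 0 < s ^ m1) by (apply pow_lt; lra).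
    assert (Hphi : 0 < phi) by (unfold phi; nra).
    assert (Hmphi : INR m * phi <= 1).
    { unfold phi. assert (INR m * lam * s ^ m1 <= INR m * lam * s) by (apply Rmult_le_compat_l; nra). nra. }
    assert (Hphi1 : phi <= 1) by nra.
    set (z := (RtoC s * u * ee phi)%C).
    set (w := (- (RtoC s * u * ee (- phi)))%C).
    assert (Hz : Cmod z = s) by (unfold z; rewrite Cmod_mult, Cmod_RtoC_mult, Hu, Cmod_ee by lra; ring).
    assert (Hw : Cmod w = s) by (unfold w; rewrite Cmod_opp, Cmod_mult, Cmod_RtoC_mult, Hu, Cmod_ee by lra; ring).
    pose proof (pair_series f a rho0 z w Hser ltac:(lra) ltac:(lra)) as PS.
    pose proof (H1 s z w ltac:(lra) ltac:(lra) ltac:(lra)) as HH.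
    set (x := fun n => (a n * Cpow z n - a n * Cpow w n)%C) in PS.
    assert (Hth : 0 <= 2 * s / r0 <= / 2).
    { replace (2 * s / r0) with ((2 * s) / r0) by ring. apply th_ok; lra. }
    pose proof (tail_from x _ (S m) (2 * B * phi) (2 * s / r0) ltac:(nra) Hth PS) as T.
    assert (Tb : forall n, (S m <= n)%nat -> Cmod (x n) <= 2 * B * phi * (2 * s / r0) ^ n).
    { intros n Hn. destruct (Nat.Even_or_Odd n) as [[i Hi]|[i Hi]]; subst n.
      - unfold x. replace (a (2 * i)%nat * Cpow z (2 * i) - a (2 * i)%nat * Cpow w (2 * i))%C
          with (a (2 * i)%nat * (Cpow z (2 * i) - Cpow w (2 * i)))%C by ring.
        unfold z, w. rewrite diff_even.
        rewrite !Cmod_mult, Cmod_Ci, Cmod_pow, Hu, !Cmod_R, pow1, Rabs_pos_eq by (apply pow_le; lra).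
        rewrite Rabs_mult, (Rabs_pos_eq 2) by lra.
        pose proof (abs_sin_le (INR (2 * i) * phi)) as hs.
        rewrite Rabs_mult, (Rabs_pos_eq (INR _)), (Rabs_pos_eq phi) in hs by (try apply pos_INR; lra).
        pose proof (INR_le_pow2 (2 * i)) as h2.
        pose proof (coef_le a r0 B (2 * i) (2 * s / r0) Hr0 (proj1 Hth) (Hb _)) as hc.
        replace (2 * s / r0 * r0) with (2 * s) in hc by (field; lra).
        rewrite Rpow_mult_distr in hc.
        pose proof (Cmod_ge_0 (a (2 * i)%nat)).
        pose proof (pow_le s (2 * i) ltac:(lra)).
        pose proof (Rabs_pos (sin (INR (2 * i) * phi))).
        assert (Cmod (a (2 * i)%nat) * s ^ (2 * i) * (2 * Rabs (sin (INR (2 * i) * phi)))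
                <= Cmod (a (2 * i)%nat) * s ^ (2 * i) * (2 * (2 ^ (2 * i) * phi))).
        { apply Rmult_le_compat_l. nra. nra. }
        assert (Cmod (a (2 * i)%nat) * s ^ (2 * i) * (2 * (2 ^ (2 * i) * phi))
                = 2 * phi * (Cmod (a (2 * i)%nat) * (2 ^ (2 * i) * s ^ (2 * i)))) by ring.
        nra.
      - assert (1 <= i)%nat by (unfold m in Hn; lia).
        unfold x. rewrite Hodd by auto. 
        replace (RtoC 0 * Cpow z (2 * i + 1) - RtoC 0 * Cpow w (2 * i + 1))%C with (RtoC 0) by ring.
        rewrite Cmod_0. pose proof (pow_le (2 * s / r0) (2 * i + 1) (proj1 Hth)).
        assert (0 <= 2 * B * phi) by nra. nra. }
    specialize (T Tb).
    rewrite fsum_sparse in T.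
    2:{ unfold m. lia. }
    2:{ intros j Hj Hj1. unfold x. destruct (Nat.Even_or_Odd j) as [[i Hi]|[i Hi]]; subst j.
        - destruct i.
          + simpl. ring.
          + rewrite IH; try (unfold m in Hj; lia). ring.
        - rewrite Hodd; try lia. ring. }
    assert (Ex : (x 1%nat + x m)%C = (RtoC (2 * s * (cos phi + lam * s ^ m1 * sin (INR m * phi))) * (a 1%nat * u))%C).
    { unfold x.
      replace (a m * Cpow z m - a m * Cpow w m)%C with (a m * (Cpow z m - Cpow w m))%C by ring.
      unfold m at 2 3. unfold z, w. rewrite diff_even. fold m.
      rewrite !Cpow_1_r.
      replace (a 1%nat * (RtoC s * u * ee phi) - a 1%nat * - (RtoC s * u * ee (- phi)))%C
        with (a 1%nat * (RtoC s * u) * (ee phi + ee (- phi)))%C by ring.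
      rewrite ee_sum.
      assert (Hum : Cpow u m = (v * u)%C) by (rewrite Hmm1, Cpow_S, Huv; ring).
      assert (Hsm : s ^ m = s * s ^ m1) by (rewrite Hmm1; reflexivity).
      rewrite Hum, Hsm. unfold v.
      repeat (rewrite RtoC_mult || rewrite RtoC_plus).
      field. split; [auto | apply Ci_nz]. }
    rewrite Ex in T.
    assert (Cs : 1 - phi ^ 2 / 2 <= cos phi) by (apply cos_lb1; lra).
    assert (Sn : INR m * phi - (INR m * phi) ^ 3 / 6 <= sin (INR m * phi)) by (apply sin_lb1; split; nra).
    assert (Sn2 : 5 / 6 * (INR m * phi) <= sin (INR m * phi)).
    { set (t := INR m * phi) in *. assert (0 <= t) by (unfold t; nra).
      pose proof (pow_le1 t 2 ltac:(lra)).
      assert (t ^ 3 = t * t ^ 2) by ring.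
      assert (t * t ^ 2 <= t * 1) by (apply Rmult_le_compat_l; lra). lra. }
    assert (Lp : lam * s ^ m1 = phi) by reflexivity.
    rewrite Lp in T.
    assert (Fg : 1 + phi ^ 2 <= cos phi + phi * sin (INR m * phi)) by nra.
    assert (Hpos : 0 <= 2 * s * (cos phi + phi * sin (INR m * phi))) by nra.
    assert (Cmod (RtoC (2 * s * (cos phi + phi * sin (INR m * phi))) * (a 1%nat * u)) <= c * s + 2 * (2 * B * phi) * (2 * s / r0) ^ S m).
    { set (X := (RtoC (2 * s * (cos phi + phi * sin (INR m * phi))) * (a 1%nat * u))%C) in *.
      set (A := (f z - f w)%C) in *.
      replace X with (A + - (A - X))%C by ring.
      eapply Rle_trans. apply Cmod_triangle. rewrite Cmod_opp. lra. }
    rewrite Cmod_RtoC_mult, Cmod_mult, Hu in H by auto.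
    rewrite pow_div_eq in H by lra. rewrite Rpow_mult_distr in H.
    assert (E1 : s ^ S m = s ^ m1 * (s * s)) by (rewrite Hmm1; simpl; ring).
    rewrite E1 in H.
    assert (E2 : 2 * (2 * B * phi) * (2 ^ S m * (s ^ m1 * (s * s)) / r0 ^ S m) = 2 * phi * s * s ^ m1 * (K * s)).
    { unfold K. field. apply pow_nonzero. lra. }
    rewrite E2 in H.
    assert (Lm : lam * Cmod (a 1%nat) = Cmod (a m)) by (unfold lam; field; lra).
    assert (G : 2 * s * Cmod (a 1%nat) * phi ^ 2 <= 2 * phi * s * s ^ m1 * (K * s)).
    { assert (c * s <= 2 * Cmod (a 1%nat) * s) by nra.
      assert (2 * s * (1 + phi ^ 2) * Cmod (a 1%nat) <= 2 * s * (cos phi + phi * sin (INR m * phi)) * (Cmod (a 1%nat) * 1)).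
      { rewrite Rmult_1_r. apply Rmult_le_compat_r. lra. apply Rmult_le_compat_l; lra. }
      nra. }
    assert (G2 : 2 * phi * s * s ^ m1 * Cmod (a m) = 2 * s * Cmod (a 1%nat) * phi ^ 2).
    { rewrite <- Lm. unfold phi. ring. }
    assert (0 < 2 * phi * s) by (apply Rmult_lt_0_compat; lra).
    assert (0 < 2 * phi * s * s ^ m1) by (apply Rmult_lt_0_compat; lra).
    apply (Rmult_le_reg_l (2 * phi * s * s ^ m1)); auto. lra. }
  pose proof (le_small _ _ d Hd Key). lra.
Qed.

Lemma series_affine (x : nat -> C) X :
  is_series (V:=C_NormedModule) x X -> (forall n, (2 <= n)%nat -> x n = RtoC 0) ->
  X = (x 0%nat + x 1%nat)%C.
Proof.
  intros H Hz.
  pose proof (tail_from x X 2 0 0 ltac:(lra) ltac:(lra) H) as T.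
  assert (Cmod (X - fsum x 2) <= 0).
  { replace 0 with (2 * 0 * 0 ^ 2) by ring. apply T.
    intros n Hn. rewrite Hz, Cmod_0 by auto. right; ring. }
  pose proof (Cmod_ge_0 (X - fsum x 2)).
  assert (Cmod (X - fsum x 2) = 0) by lra.
  apply Cmod_eq_0 in H2. apply Ceq_minus in H2. rewrite H2. simpl. ring.
Qed.

Lemma mult_cancel (x y : C) : (x * y)%C = RtoC 0 -> y <> RtoC 0 -> x = RtoC 0.
Proof. intros H Hy. replace x with (x * y / y)%C by (field; auto). rewrite H. field. auto. Qed.

Lemma propagate (f : C -> C) (a0 a1 : C) rho :
  analytic_on_disk f -> 0 < rho ->
  (forall z, Cmod z < rho -> f z = (a0 + a1 * z)%C) ->
  forall z, Cmod z < 1 -> f z = (a0 + a1 * z)%C.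
Proof.
  intros Han Hrho Hloc z Hz.
  destruct (Ceq_dec z (RtoC 0)) as [Ez|Ez].
  { apply Hloc. rewrite Ez, Cmod_0. lra. }
  assert (Pz : 0 < Cmod z) by (apply Cmod_gt_0; auto).
  set (L := fun y => (a0 + a1 * y)%C).
  set (E := fun t => 0 <= t <= 1 /\ forall s, 0 <= s <= t -> f (RtoC s * z)%C = L (RtoC s * z)%C).
  assert (E0 : E 0).
  { split. lra. intros s Hs. apply Hloc. rewrite Cmod_RtoC_mult by lra.
    replace s with 0 by lra. lra. }
  assert (Eb : bound E) by (exists 1; intros t [Ht _]; lra).
  destruct (completeness E Eb (ex_intro _ 0 E0)) as [T [HTub HTlub]].
  assert (T0 : 0 <= T) by (apply HTub; auto).
  assert (T1 : T <= 1) by (apply HTlub; intros t [Ht _]; lra).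
  assert (CA : forall s, 0 <= s < T -> f (RtoC s * z)%C = L (RtoC s * z)%C).
  { intros s Hs. destruct (classic (exists t, E t /\ s < t)) as [[t [[_ Ht] Hst]]|N].
    - apply Ht. lra.
    - exfalso. assert (T <= s).
      { apply HTlub. intros t Et. destruct (Rle_lt_dec t s); auto. exfalso. apply N. exists t; auto. }
      lra. }
  assert (CB : exists r1, 0 < r1 /\ forall y, Cmod (y - RtoC T * z) < r1 -> f y = L y).
  { destruct (Req_dec T 0) as [HT0|HT0].
    - exists rho. split; auto. intros y Hy. apply Hloc.
      replace y with (y - RtoC T * z)%C; auto. rewrite HT0. ring.
    - assert (HTz : Cmod (RtoC T * z) < 1).
      { rewrite Cmod_RtoC_mult by lra. assert (T * Cmod z <= 1 * Cmod z) by (apply Rmult_le_compat_r; lra). lra. }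
      destruct (Han _ HTz) as [b [rb [Hrb Hb]]].
      set (eps := Rmin (rb / Cmod z) T).
      assert (Heps : 0 < eps) by (unfold eps; apply Rmin_pos; [apply Rdiv_lt_0_compat|]; lra).
      destruct (uniq_aff (fun n => b n * Cpow (- z) n)%C eps (L (RtoC T * z)%C) (- (a1 * z))%C Heps) as [U0 [U1 U2]].
      { intros s Hs.
        assert (s < rb / Cmod z) by (pose proof (Rmin_l (rb / Cmod z) T); fold eps in H; lra).
        assert (s < T) by (pose proof (Rmin_r (rb / Cmod z) T); fold eps in H0; lra).
        set (y := (RtoC (T - s) * z)%C).
        assert (Hy : (y - RtoC T * z)%C = (RtoC s * - z)%C) by (unfold y; rewrite RtoC_minus; ring).
        assert (Hys : Cmod (y - RtoC T * z) < rb).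
        { rewrite Hy, Cmod_RtoC_mult, Cmod_opp by lra.
          apply (Rmult_lt_compat_r (Cmod z)) in H; auto. replace (rb / Cmod z * Cmod z) with rb in H by (field; lra). lra. }
        pose proof (Hb y Hys) as S1.
        replace (f y) with (L y) in S1 by (symmetry; apply (CA (T - s)); lra).
        replace (L y) with (L (RtoC T * z) + - (a1 * z) * RtoC s)%C in S1.
        2:{ unfold L, y. rewrite RtoC_minus. ring. }
        eapply is_series_ext; [|exact S1]. intro n. simpl. rewrite pow_n_C, Hy, Cpow_mult_l. ring. }
      exists rb. split; auto. intros y Hy.
      pose proof (Hb y Hy) as S1.
      rewrite (series_affine _ _ S1).
      + simpl. simpl in U0, U1.
        assert (Eb1 : b 1%nat = a1).
        { assert ((b 1%nat - a1) * - z = RtoC 0)%C.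
          { replace ((b 1%nat - a1) * - z)%C with (b 1%nat * (- z * 1) + a1 * z)%C by ring. rewrite U1. ring. }
          apply mult_cancel in H; [|intro h; apply Ez; replace z with (- - z)%C by ring; rewrite h; ring].
          apply Ceq_minus. auto. }
        replace (b 0%nat) with (L (RtoC T * z)%C) by (rewrite <- U0; ring).
        rewrite Eb1. unfold L. change (@one C_Ring) with (RtoC 1). change (@mult C_Ring) with Cmult. ring.
      + intros n Hn. specialize (U2 n Hn). simpl in U2.
        apply mult_cancel in U2.
        * rewrite U2. ring.
        * apply Cpow_nz. intro h. apply Ez. replace z with (- - z)%C by ring. rewrite h. ring. }
  destruct CB as [r1 [Hr1 CB]].
  destruct (Rlt_le_dec T 1) as [HT1|HT1].
  - exfalso.
    set (T' := Rmin 1 (T + r1 / (2 * Cmod z))).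
    assert (ET' : E T').
    { split. split. unfold T'. apply Rmin_glb. lra. assert (0 < r1 / (2 * Cmod z)) by (apply Rdiv_lt_0_compat; lra). lra.
      apply Rmin_l.
      intros s Hs. destruct (Rlt_le_dec s T). apply CA. lra.
      apply CB. replace (RtoC s * z - RtoC T * z)%C with (RtoC (s - T) * z)%C by (rewrite RtoC_minus; ring).
      rewrite Cmod_RtoC_mult by lra.
      assert (s - T <= r1 / (2 * Cmod z)) by (pose proof (Rmin_r 1 (T + r1 / (2 * Cmod z))); fold T' in H; lra).
      apply (Rmult_le_compat_r (Cmod z)) in H; [|lra].
      replace (r1 / (2 * Cmod z) * Cmod z) with (r1 / 2) in H by (field; lra). lra. }
    pose proof (HTub T' ET').
    assert (T < T').
    { unfold T'. apply Rmin_glb_lt. auto. assert (0 < r1 / (2 * Cmod z)) by (apply Rdiv_lt_0_compat; lra). lra. }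
    lra.
  - assert (T = 1) by lra. apply CB. rewrite H. replace (z - RtoC 1 * z)%C with (RtoC 0) by ring. rewrite Cmod_0. auto.
Qed.

Theorem corollary4 (f : C -> C) (c : R) :
  analytic_on_disk f ->
  0 <= c ->
  (forall r : R, 0 < r < 1 -> diam_image_disk f r = Finite (c * r)) ->
  exists a b : C, forall z : C, Cmod z < 1 -> f z = (a + b * z)%C.
Proof.
  intros Han Hc Hd.
  assert (H1 : forall r z w, 0 < r < 1 -> Cmod z < r -> Cmod w < r -> Cmod (f z - f w) <= c * r).
  { intros r z w Hr Hz Hw. specialize (Hd r Hr). unfold diam_image_disk in Hd.
    destruct (Lub_Rbar_correct (fun d : R => exists z w : C, Cmod z < r /\ Cmod w < r /\ d = Cmod (f z - f w)%C)) as [Hub _].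
    rewrite Hd in Hub. apply (Hub (Cmod (f z - f w))). exists z, w. auto. }
  assert (H2 : forall r eps, 0 < r < 1 -> 0 < eps -> exists z w, Cmod z < r /\ Cmod w < r /\ c * r - eps < Cmod (f z - f w)).
  { intros r eps Hr He. specialize (Hd r Hr). unfold diam_image_disk in Hd.
    destruct (Lub_Rbar_correct (fun d : R => exists z w : C, Cmod z < r /\ Cmod w < r /\ d = Cmod (f z - f w)%C)) as [_ Hlub].
    rewrite Hd in Hlub.
    destruct (classic (exists z w, Cmod z < r /\ Cmod w < r /\ c * r - eps < Cmod (f z - f w))) as [X|N]; auto.
    exfalso.
    assert (Rbar_le (c * r) (c * r - eps)).
    { apply Hlub. intros d [z [w [Hz [Hw Hdz]]]]. simpl. subst d.
      destruct (Rle_lt_dec (Cmod (f z - f w)) (c * r - eps)); auto. exfalso. apply N. exists z, w. auto. }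
    simpl in H. lra. }
  assert (H1' : forall s z w, 0 < s < 1 -> Cmod z <= s -> Cmod w <= s -> Cmod (f z - f w) <= c * s).
  { intros s z w Hs Hz Hw. set (X := Cmod (f z - f w)).
    destruct (Rle_lt_dec X (c * s)) as [|HX]; auto. exfalso.
    set (del := Rmin ((1 - s) / 2) ((X - c * s) / (2 * (c + 1)))).
    assert (Hdel : 0 < del) by (unfold del; apply Rmin_pos; apply Rdiv_lt_0_compat; lra).
    assert (D1 : del <= (1 - s) / 2) by apply Rmin_l.
    assert (D2 : del <= (X - c * s) / (2 * (c + 1))) by apply Rmin_r.
    pose proof (H1 (s + del) z w ltac:(lra) ltac:(lra) ltac:(lra)) as h. fold X in h.
    assert (c * del <= (X - c * s) / 2).
    { apply Rle_trans with (c * ((X - c * s) / (2 * (c + 1)))). apply Rmult_le_compat_l; lra.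
      apply (Rmult_le_reg_r (2 * (c + 1))). lra.
      replace (c * ((X - c * s) / (2 * (c + 1))) * (2 * (c + 1))) with (c * (X - c * s)) by (field; lra).
      replace ((X - c * s) / 2 * (2 * (c + 1))) with ((c + 1) * (X - c * s)) by (field; lra). nra. }
    nra. }
  assert (HC0 : Cmod (RtoC 0) < 1) by (rewrite Cmod_0; lra).
  destruct (Han _ HC0) as [a [rho [Hrho Hs]]].
  assert (Hser : forall z, Cmod z < rho -> is_series (V:=C_NormedModule) (fun n => a n * Cpow z n)%C (f z)).
  { intros z Hz. assert (Cmod (z - RtoC 0) < rho) by (replace (z - RtoC 0)%C with z by ring; auto).
    pose proof (Hs z H) as S1. replace (z - RtoC 0)%C with z in S1 by ring.
    eapply is_series_ext; [|exact S1]. intro n. simpl. rewrite pow_n_C. reflexivity. }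
  set (r0 := Rmin rho 1 / 2).
  assert (Hr0 : 0 < r0) by (unfold r0; apply Rdiv_lt_0_compat; [apply Rmin_pos|]; lra).
  assert (Hr1 : r0 < rho) by (unfold r0; pose proof (Rmin_l rho 1); lra).
  assert (Hr2 : r0 <= / 2) by (unfold r0; pose proof (Rmin_r rho 1); lra).
  assert (Hcr : Cmod (RtoC r0) < rho) by (rewrite Cmod_R, Rabs_pos_eq; lra).
  destruct (coef_bound a r0 _ Hr0 (Hser _ Hcr)) as [B [HB Hb]].
  pose proof (step1 f c a rho r0 B Hser Hr0 Hr1 Hr2 HB Hb H2) as S1.
  destruct (Ceq_dec (a 1%nat) (RtoC 0)) as [A1|A1].
  - rewrite A1, Cmod_0 in S1. assert (c = 0) by lra.
    exists (f (RtoC 0)), (RtoC 0). intros z Hz.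
    pose proof (H1 ((Cmod z + 1) / 2) z (RtoC 0)) as h.
    pose proof (Cmod_ge_0 z).
    rewrite Cmod_0 in h. specialize (h ltac:(lra) ltac:(lra) ltac:(lra)).
    rewrite H, Rmult_0_l in h. pose proof (Cmod_ge_0 (f z - f (RtoC 0))).
    assert (Hm0 : Cmod (f z - f (RtoC 0)) = 0) by lra.
    apply Cmod_eq_0, Ceq_minus in Hm0. rewrite Hm0. ring.
  - pose proof (step3a f c a rho r0 B Hser Hr0 Hr1 Hr2 HB Hb H1' S1 A1) as Odd.
    pose proof (step3b f c a rho r0 B Hser Hr0 Hr1 Hr2 HB Hb H1' S1 A1 Odd) as Even.
    assert (Hz2 : forall n, (2 <= n)%nat -> a n = RtoC 0).
    { intros n Hn. destruct (Nat.Even_or_Odd n) as [[i Hi]|[i Hi]]; subst n.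
      apply Even; lia. apply Odd; lia. }
    exists (a 0%nat), (a 1%nat).
    apply (propagate f (a 0%nat) (a 1%nat) rho Han Hrho).
    intros z Hz. rewrite (series_affine _ _ (Hser z Hz)).
    + simpl. ring.
    + intros n Hn. rewrite Hz2 by auto. ring.
Qed.
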